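(* For any categorial sequential allocation mechanism $f_\mathcal O$ and any assignment of each agent as optimistic or pessimistic, there exists a profile $P$ such that for all agents $j$: (1) if $j$ is optimistic, then the rank of the bundle allocated to $j$ is exactly $n^p+1-\prod_{l=K_j}^{p}k_{j,\mathcal O_j(l)}$; (2) if $j$ is pessimistic, then the rank of the bundle allocated to $j$ is exactly $n^p-\sum_{l=1}^{p}(k_{j,\mathcal O_j(l)}-1)$; and moreover (3) there exists an allocation in which at least $n-1$ agents get their top-ranked bundles and the remaining agent gets her top-ranked or second-ranked bundle.
   Context: Basic categorized domain: $n$ agents, $p$ categories $D_i=\{1,\ldots,n\}$ of indivisible items, bundles $\mathfrak D=D_1\times\cdots\times D_p$; each agent $j$ has a linear order $R_j$ over $\mathfrak D$ (a profile is $(R_1,\ldots,R_n)$). An allocation gives each agent one bundle so that each item of each category goes to exactly one agent. The rank of a bundle in $R$ is its position, the top having rank $1$ and the bottom rank $n^p$. CSAM $f_\mathcal O$: given a linear order $\mathcal O$ over $\{1,\ldots,n\}\times\{1,\ldots,p\}$, in rounds $t=1,\ldots,np$, if the $t$-th element of $\mathcal O$ is $(j,i)$ then agent $j$ chooses an item $d_{j,i}$ from $D_{i,t}$, the items of $D_i$ not yet chosen at the start of round $t$. Agent $j$ receives $(d_{j,1},\ldots,d_{j,p})$. Each agent is fixed in advance to be optimistic or pessimistic. When agent $j$ chooses from $D_i$ in round $t$, a bundle is available to her if for each category $l$ from which she has already chosen its $l$-th component equals $d_{j,l}$, and for each other category $l$ its $l$-th component lies in $D_{l,t}$. An optimistic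 agent chooses the $i$-th component of her top-ranked available bundle. A pessimistic agent chooses the $d\in D_{i,t}$ for which her lowest-ranked available bundle with $i$-th component $d$ is highest in $R_j$. Notation: $\mathcal O_j(l)$ is the $l$-th category agent $j$ chooses from in $\mathcal O$. $k_{j,i}$ is $n$ minus the number of agents who choose from $D_i$ before $j$ in $\mathcal O$. $K_j$ is the smallest $K\in\{1,\ldots,p\}$ such that for every $l$ with $K<l\leq p$, no agent chooses from category $\mathcal O_j(l)$ in any round strictly between the rounds of $(j,\mathcal O_j(K))$ and $(j,\mathcal O_j(l))$. *)

(* Defs.v *)
From mathcomp Require Import all_boot.
Set Implicit Arguments. Unset Strict Implicit. Unset Printing Implicit Defensive.

Section CSAM.
Variables n p : nat.

(* agents and items of each category are 'I_n (items 1..n shifted to 0..n-1),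
   categories are 'I_p; a bundle picks one item of each category *)
Definition bundle := {ffun 'I_p -> 'I_n}.

(* a linear order over a finite type, listed from top to bottom *)
Definition is_linorder (T : finType) (s : seq T) : Prop := perm_eq s (enum T).

Definition rank (R : seq bundle) (b : bundle) : nat := (index b R).+1.

(* state of the mechanism: s (j,i) = Some d iff agent j already chose d from D_i *)
Definition state := {ffun 'I_n * 'I_p -> option 'I_n}.

Definition state0 : state := [ffun _ => None].

Definition remaining (s : state) (l : 'I_p) : pred 'I_n :=
  [pred d | ~~ [exists j : 'I_n, s (j, l) == Some d]].

Definition available (s : state) (j : 'I_n) : pred bundle :=
  [pred b : bundle | [forall l : 'I_p,
     match s (j, l) with
     | Some d => b l == d
     | None => b l \in remaining s l
     end]].

Definition opt_choice (R : seq bundle) (s : state) (j : 'I_n) (i : 'I_p)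
  : option 'I_n :=
  omap (fun b : bundle => b i)
    [pick b | (b \in available s j) &&
              [forall b' : bundle, (b' \in available s j) ==> (rank R b <= rank R b')]].

Definition worst_rank (R : seq bundle) (s : state) (j : 'I_n) (i : 'I_p) (d : 'I_n)
  : nat := \max_(b : bundle | (b \in available s j) && (b i == d)) rank R b.

Definition pes_choice (R : seq bundle) (s : state) (j : 'I_n) (i : 'I_p)
  : option 'I_n :=
  [pick d | (d \in remaining s i) &&
     [forall d' : 'I_n, (d' \in remaining s i) ==>
        (worst_rank R s j i d <= worst_rank R s j i d')]].

Definition step (opt : 'I_n -> bool) (P : 'I_n -> seq bundle)
  (s : state) (x : 'I_n * 'I_p) : state :=
  let c := if opt x.1 then opt_choice (P x.1) s x.1 x.2
           else pes_choice (P x.1) s x.1 x.2 in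
  [ffun y => if y == x then c else s y].

Definition csam (O : seq ('I_n * 'I_p)) (opt : 'I_n -> bool)
  (P : 'I_n -> seq bundle) : state := foldl (step opt P) state0 O.

Definition round (O : seq ('I_n * 'I_p)) (x : 'I_n * 'I_p) : nat := index x O.

(* categories in the order agent j chooses them; O_j(l+1) = Ocat O j l *)
Definition Ocat (O : seq ('I_n * 'I_p)) (j : 'I_n) (l : 'I_p) : 'I_p :=
  nth l [seq x.2 | x <- O & x.1 == j] l.

Definition kk (O : seq ('I_n * 'I_p)) (j : 'I_n) (i : 'I_p) : nat :=
  n - #|[set j' : 'I_n | round O (j', i) < round O (j, i)]|.

(* K satisfies the condition (0-based: K stands for K+1) *)
Definition goodK (O : seq ('I_n * 'I_p)) (j : 'I_n) (K : nat) : bool :=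
  [forall l : 'I_p, forall j' : 'I_n, forall K' : 'I_p,
     ((nat_of_ord K' == K) && (K < l)) ==>
     ~~ ((round O (j, Ocat O j K') < round O (j', Ocat O j l)) &&
         (round O (j', Ocat O j l) < round O (j, Ocat O j l)))].

(* K_j - 1 : smallest good K in 0..p-1 *)
Definition Kj (O : seq ('I_n * 'I_p)) (j : 'I_n) : nat := find (goodK O j) (iota 0 p).

Definition is_allocation (A : 'I_n -> bundle) : Prop :=
  forall (i : 'I_p) (d : 'I_n), exists! j : 'I_n, A j i = d.

End CSAM.

(* Main.v *)
Require Import Defs.
From mathcomp Require Import all_boot zify.
Set Implicit Arguments. Unset Strict Implicit. Unset Printing Implicit Defensive.

Lemma count_index_lt (T : eqType) (s : seq T) i :
  uniq s -> i <= size s -> count (fun y => index y s < i) s = i.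
Proof.
elim: s i => [|x s IH] [|i] //= /andP[xs us] Hi.
  by apply/eqP; rewrite add0n eqn0Ngt -has_count; apply/hasPn => y _.
rewrite eqxx /= add1n; congr _.+1; rewrite -[RHS](IH i us Hi).
by apply: eq_in_count => y ys /=; rewrite (_ : (x == y) = false) // ; apply/eqP => E; rewrite E ys in xs.
Qed.

Lemma rank_sort (T : finType) (key : T -> nat) (inj : injective key) b :
  index b (sort (fun x y => key x <= key y) (enum T)) = #|[pred y | key y < key b]|.
Proof.
set s := sort _ _.
have ps : perm_eq s (enum T) by rewrite perm_sort perm_refl.
have us : uniq s by rewrite (perm_uniq ps) enum_uniq.
have ms : forall y, y \in s by move=> y; rewrite (perm_mem ps) mem_enum.
have ss : sorted (fun x y => key x <= key y) s by apply: sort_sorted => x y; apply: leq_total.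
have tr : transitive (fun x y : T => key x <= key y) by move=> x y z; apply: leq_trans.
have hom := sorted_ltn_nth tr b ss.
rewrite -{1}(count_index_lt us (ltnW _ : index b s <= size s)); last by rewrite index_mem.
rewrite (@eq_in_count _ _ (fun y => key y < key b)); last first.
  move=> y ys /=.
  have iy : index y s < size s by rewrite index_mem.
  have ib : index b s < size s by rewrite index_mem.
  case: (ltngtP (index y s) (index b s)) => H.
  - have := hom _ _ iy ib H; rewrite !nth_index //= leq_eqVlt => /orP[/eqP E|-> //].
    by move: (inj _ _ E) => E'; rewrite E' ltnn in H.
  - have := hom _ _ ib iy H; rewrite !nth_index //= => K; by rewrite ltnNge K.
  - have : y = b by rewrite -(nth_index b ys) H nth_index.
    by move=> ->; rewrite ltnn.
move/permP: ps => ->.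
rewrite cardE /enum_mem size_filter count_filter; apply: eq_count => y /=; by rewrite andbT.
Qed.

Lemma card_lt n m : m <= n -> #|[set d : 'I_n | d < m]| = m.
Proof.
move=> mn; rewrite cardE /enum_mem size_filter.
have -> : count (mem [set d : 'I_n | d < m]) (Finite.enum 'I_n) = count (fun d : nat => d < m) (map val (enum 'I_n)).
  rewrite count_map enumT; apply: eq_count => d /=; by rewrite inE.
rewrite val_enum_ord -(subnKC mn) iotaD count_cat.
rewrite (@eq_in_count _ _ predT (iota 0 m)); last by move=> x; rewrite mem_iota.
rewrite count_predT size_iota add0n.
rewrite (@eq_in_count _ _ pred0 (iota m (n - m))); last by move=> x; rewrite mem_iota => /andP[H _] /=; rewrite ltnNge H.
by rewrite count_pred0 addn0.
Qed.

Lemma card_ge n m : m <= n -> #|[set d : 'I_n | m <= d]| = n - m.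
Proof.
move=> mn; have := cardsC [set d : 'I_n | d < m]; rewrite card_lt // card_ord.
have -> : ~: [set d : 'I_n | d < m] = [set d : 'I_n | m <= d].
  by apply/setP => d; rewrite !inE ltnNge negbK.
by move=> E; rewrite -[in RHS]E addKn.
Qed.

Section S.
Variables (n p : nat) (O : seq ('I_n * 'I_p)).
Hypothesis HO : is_linorder O.
Local Notation rnd := (round O).

Lemma uniqO : uniq O.
Proof. by rewrite (perm_uniq HO) enum_uniq. Qed.
Lemma memO x : x \in O.
Proof. by rewrite (perm_mem HO) mem_enum. Qed.
Lemma sizeO : size O = n * p.
Proof. by rewrite (perm_size HO) -cardT card_prod !card_ord. Qed.
Lemma rnd_lt x : rnd x < n * p.
Proof. by rewrite -sizeO /round index_mem memO. Qed.
Lemma rnd_inj x y : rnd x = rnd y -> x = y.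
Proof. by move=> E; apply: (@index_inj _ x O x y (memO x) (memO y)). Qed.
Lemma nth_rnd x0 x : nth x0 O (rnd x) = x.
Proof. by rewrite nth_index // memO. Qed.
Lemma rnd_nth x0 t : t < n * p -> rnd (nth x0 O t) = t.
Proof. by move=> H; rewrite /round index_uniq // ?sizeO // uniqO. Qed.

Definition cnt (c : 'I_p) t := #|[set j' : 'I_n | rnd (j', c) < t]|.
Definition pos (x : 'I_n * 'I_p) := cnt x.2 (rnd x).

Lemma kk_pos j c : kk O j c = n - pos (j, c).
Proof. by []. Qed.

Lemma cnt_le c t : cnt c t <= n.
Proof. by rewrite /cnt -[X in _ <= X]card_ord max_card. Qed.

Lemma pos_cnt_lt x t : rnd x < t -> pos x < cnt x.2 t.
Proof.
case: x => j c /= H; rewrite /pos /cnt /=; apply: proper_card; apply/properP; split.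
  by apply/subsetP => j'; rewrite !inE => /ltn_trans; apply.
by exists j; rewrite !inE ?ltnn.
Qed.

Lemma cnt_mono c t t' : t <= t' -> cnt c t <= cnt c t'.
Proof.
move=> H; apply: subset_leq_card; apply/subsetP => j'; rewrite !inE => /leq_trans; apply.
by [].
Qed.

Lemma pos_le_cnt x t : t <= rnd x -> cnt x.2 t <= pos x.
Proof. by case: x => j c H; apply: cnt_mono. Qed.

Lemma pos_lt x : pos x < n.
Proof. by apply: (leq_trans (pos_cnt_lt (ltnSn (rnd x)))); apply: cnt_le. Qed.

Lemma pos_mono j1 j2 c : rnd (j1, c) < rnd (j2, c) -> pos (j1, c) < pos (j2, c).
Proof. by move=> H; apply: (pos_cnt_lt H). Qed.

Lemma pos_inj c j1 j2 : pos (j1, c) = pos (j2, c) -> j1 = j2.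
Proof.
move=> E; case: (ltngtP (rnd (j1, c)) (rnd (j2, c))) => H.
- by move: (pos_mono H); rewrite E ltnn.
- by move: (pos_mono H); rewrite E ltnn.
- by case: (rnd_inj H).
Qed.

Definition Fv x : 'I_n := Ordinal (pos_lt x).

Definition st t : state n p := [ffun x => if rnd x < t then Some (Fv x) else None].

Lemma remaining_st t c d : (d \in remaining (st t) c) = (cnt c t <= d).
Proof.
rewrite inE; apply/idP/idP.
  move=> /existsPn H; rewrite leqNgt; apply/negP => dlt.
  pose X := [set j' : 'I_n | rnd (j', c) < t].
  pose f := fun j' : 'I_n => Fv (j', c).
  have fi : injective f by move=> a b /(congr1 val) /= /pos_inj.
  have sub : f @: X \subset [set d : 'I_n | d < cnt c t].
    apply/subsetP => _ /imsetP[j' jX ->]; rewrite !inE /=.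
    by apply: (pos_cnt_lt (x := (j', c))); rewrite inE in jX.
  have ce : #|f @: X| = #|[set d : 'I_n | d < cnt c t]| by rewrite card_imset // card_lt // cnt_le.
  move/subset_cardP: ce => /(_ sub) eqs.
  have : d \in f @: X by rewrite eqs inE.
  case/imsetP => j' jX dE; move: (H j'); rewrite ffunE; rewrite inE in jX; rewrite jX dE.
  by rewrite eqxx.
move=> H; apply/existsPn => j'; rewrite ffunE; case: ifP => // Hr.
apply/eqP => [[E]]; have := pos_cnt_lt (x := (j', c)) Hr.
by rewrite -[pos _]/(val (Fv (j', c))) E ltnNge H.
Qed.


Lemma st0 : st 0 = state0 n p.
Proof. by apply/ffunP => x; rewrite !ffunE. Qed.

Lemma csam_st (opt : 'I_n -> bool) (P : 'I_n -> seq (bundle n p)) (x0 : 'I_n * 'I_p) :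
  (forall x, (if opt x.1 then opt_choice (P x.1) (st (rnd x)) x.1 x.2
              else pes_choice (P x.1) (st (rnd x)) x.1 x.2) = Some (Fv x)) ->
  csam O opt P = st (n * p).
Proof.
move=> Hc.
suff H : forall t, t <= n * p -> foldl (step opt P) (state0 n p) (take t O) = st t.
  by rewrite /csam -H // -sizeO take_size.
elim=> [|t IH] Ht; first by rewrite take0 /= st0.
rewrite (take_nth x0) ?sizeO // foldl_rcons IH ?(ltnW Ht) //.
set x := nth x0 O t.
have rx : rnd x = t by rewrite rnd_nth.
apply/ffunP => y; rewrite /step !ffunE /=.
case: eqP => [->|ny]; first by rewrite rx ltnSn -rx Hc.
have -> // : (rnd y < t.+1) = (rnd y < t).
rewrite ltnS leq_eqVlt; case: eqP => //= E.
by case: ny; apply: rnd_inj; rewrite E rx.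
Qed.

Lemma avail_st t j (b : bundle n p) : (b \in available (st t) j) =
  [forall c, if rnd (j, c) < t then b c == Fv (j, c) else cnt c t <= b c].
Proof.
rewrite /available inE; apply: eq_forallb => c; rewrite ffunE.
by case: ifP => _ //; rewrite remaining_st.
Qed.

Lemma avail_stP t j (b : bundle n p) : reflect
  (forall c, if rnd (j, c) < t then b c = Fv (j, c) else cnt c t <= b c)
  (b \in available (st t) j).
Proof.
rewrite avail_st; apply: (iffP forallP) => H c; move: (H c); case: ifP => // _; first by move/eqP.
by move=> ->.
Qed.

Definition Fb j : bundle n p := [ffun c => Fv (j, c)].

Lemma avail_mono t t' j b : t' <= t -> b \in available (st t) j -> b \in available (st t') j.
Proof.
move=> tt /avail_stP H; apply/avail_stP => c; move: (H c).
case: (ltnP (rnd (j, c)) t') => h1.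
  by rewrite (leq_trans h1 tt).
case: ifP => _; first by move=> ->; apply: pos_le_cnt.
by apply: leq_trans; apply: cnt_mono.
Qed.

Lemma F_avail t j : Fb j \in available (st t) j.
Proof.
apply/avail_stP => c; rewrite ffunE; case: ltnP => // h; exact: pos_le_cnt.
Qed.

Lemma find_le (T : eqType) (a : pred T) s x : x \in s -> a x -> find a s <= index x s.
Proof.
move=> xs ax; rewrite leqNgt; apply/negP => H; have := before_find x H.
by rewrite nth_index // ax.
Qed.

Lemma find_ge (T : Type) (a : pred T) s t x0 : t <= size s ->
  (forall i, i < t -> ~~ a (nth x0 s i)) -> t <= find a s.
Proof.
move=> ts Hi; rewrite leqNgt; apply/negP => H.
have hs : has a s by rewrite has_find (leq_trans H ts).
by have := nth_find x0 hs; rewrite (negbTE (Hi _ H)).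
Qed.

Definition fr j := find (fun x : 'I_n * 'I_p => x.1 == j) O.

Lemma fr_le j c : fr j <= rnd (j, c).
Proof. by apply: find_le; [apply: memO | rewrite /= eqxx]. Qed.

Lemma fr_ex j : 0 < p -> exists c, fr j = rnd (j, c).
Proof.
move=> p0; have hs : has (fun x : 'I_n * 'I_p => x.1 == j) O.
  by apply/hasP; exists (j, Ordinal p0); [apply: memO | rewrite /= eqxx].
have := nth_find (j, Ordinal p0) hs; rewrite -/(fr j).
case E: (nth _ O (fr j)) => [j' c] /= /eqP ej; subst j'; exists c.
rewrite -E rnd_nth // -sizeO -has_find //.
Qed.

Definition fd j (b : bundle n p) := find (fun x : 'I_n * 'I_p => (x.1 == j) && (b x.2 != Fv x)) O.

Lemma fd_le j (b : bundle n p) c : b c != Fv (j, c) -> fd j b <= rnd (j, c).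
Proof. by move=> H; apply: find_le; [apply: memO | rewrite /= eqxx]. Qed.

Lemma fd_ge j (b : bundle n p) t : t <= n * p -> (forall c, rnd (j, c) < t -> b c = Fv (j, c)) -> t <= fd j b.
Proof.
move=> tQ H; case: t tQ H => [|t] // tQ H.
have : 0 < n * p by apply: leq_trans tQ.
rewrite muln_gt0 => /andP[n0 p0]; pose x0 := (Ordinal n0, Ordinal p0).
apply: (find_ge (x0 := x0)); first by rewrite sizeO.
move=> i it; case E: (nth x0 _ i) => [j' c] /=; apply/negP => /andP[/eqP ej].
subst j'; rewrite H ?eqxx //.
have : rnd (nth x0 O i) = i by apply: rnd_nth; apply: leq_trans tQ.
by rewrite E => ->.
Qed.

Lemma fd_leQ j (b : bundle n p) : fd j b <= n * p.
Proof. by rewrite -sizeO find_size. Qed.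

Lemma count_enumT (T : finType) (a : pred T) : count a (enum T) = #|a|.
Proof.
by rewrite cardE /enum_mem size_filter /enum_mem count_filter; apply: eq_count => x; rewrite /= andbT.
Qed.

Definition Oj j := [seq x <- O | x.1 == j].

Lemma size_Oj j : size (Oj j) = p.
Proof.
rewrite size_filter; move/permP: HO => ->; rewrite count_enumT.
have -> : #|[pred x : 'I_n * 'I_p | x.1 == j]| = #|[set (j, c) | c : 'I_p]|.
  apply: eq_card => x; rewrite inE /=; apply/eqP/imsetP => [<-|[c _ ->] //].
  by exists x.2 => //; case: x.
by rewrite card_imset ?card_ord // => c c' [].
Qed.

Lemma Ocat_nth j (l : 'I_p) : (j, Ocat O j l) = nth (j, l) (Oj j) l.
Proof.
have ls : l < size (Oj j) by rewrite size_Oj.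
rewrite /Ocat (nth_map (j, l)) //.
have := mem_nth (j, l) ls; rewrite mem_filter => /andP[/eqP e _].
by case: (nth _ _ _) e => a b /= ->.
Qed.

Lemma sorted_rnd : sorted ltn (map rnd O).
Proof.
case E: O => [|x0 s] //; rewrite -E.
have -> : map rnd O = iota 0 (n * p).
  apply: (eq_from_nth (x0 := 0)); first by rewrite size_map size_iota sizeO.
  move=> i; rewrite size_map sizeO => ii.
  by rewrite (nth_map x0) ?sizeO // rnd_nth // nth_iota.
exact: iota_ltn_sorted.
Qed.

Lemma Ocat_mono j (l l' : 'I_p) : l < l' -> rnd (j, Ocat O j l) < rnd (j, Ocat O j l').
Proof.
move=> ll.
have so : sorted ltn (map rnd (Oj j)).
  apply: (subseq_sorted ltn_trans _ sorted_rnd); apply: map_subseq; exact: filter_subseq.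
have := sorted_ltn_nth ltn_trans 0 so; rewrite size_map size_Oj => H.
have := H l l'; rewrite !inE => /(_ (ltn_ord l) (ltn_ord l') ll).
rewrite (nth_map (j, l)) ?size_Oj // (nth_map (j, l')) ?size_Oj //.
by rewrite -!Ocat_nth.
Qed.

Lemma Ocat_lt j (l l' : 'I_p) : (rnd (j, Ocat O j l) < rnd (j, Ocat O j l')) = (l < l').
Proof.
apply/idP/idP; last exact: Ocat_mono.
case: (ltngtP l l') => // H.
  by have H1 := Ocat_mono j H => H2; move: (ltn_trans H1 H2); rewrite ltnn.
by move: H => /val_inj ->; rewrite ltnn.
Qed.

Lemma Ocat_inj j : injective (Ocat O j).
Proof.
move=> l l' E; case: (ltngtP l l') => [H|H|/val_inj //]; have := Ocat_mono j H; by rewrite E ltnn.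
Qed.

Lemma Ocat_surj j c : exists l, Ocat O j l = c.
Proof. by exists (invF (@Ocat_inj j) c); rewrite f_invF. Qed.

Definition good' j u := [forall x : 'I_n * 'I_p, ~~ ((u < rnd x) && (rnd x < rnd (j, x.2)))].

Lemma goodK_iff j (K : 'I_p) : goodK O j K = good' j (rnd (j, Ocat O j K)).
Proof.
apply/forallP/forallP.
- move=> H [j' c]; apply/negP => /andP[h1 h2] /=.
  have [l El] := Ocat_surj j c; subst c.
  have Kl : K < l by rewrite -(Ocat_lt j); apply: ltn_trans h1 h2.
  have := H l; move/forallP/(_ j')/forallP/(_ K)/implyP; rewrite eqxx Kl /=.
  by move=> /(_ isT); rewrite h1 h2.
- move=> H l; apply/forallP => j'; apply/forallP => K'; apply/implyP => /andP[/eqP eK _].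
  have -> : K' = K by apply: val_inj.
  exact: (H (j', Ocat O j l)).
Qed.

Hypothesis p_gt0 : 0 < p.

Lemma Kj_has j : has (goodK O j) (iota 0 p).
Proof.
apply/hasP; exists p.-1; first by rewrite mem_iota /= add0n prednK // leqnn andbT.
apply/forallP => l; apply/forallP => j'; apply/forallP => K'; apply/implyP => /andP[_ H].
by move: (ltn_ord l) H p_gt0; lia.
Qed.

Lemma Kj_lt j : Kj O j < p.
Proof. by have := Kj_has j; rewrite has_find size_iota. Qed.

Definition KjO j : 'I_p := Ordinal (Kj_lt j).
Definition tK j := rnd (j, Ocat O j (KjO j)).

Lemma tK_good j : good' j (tK j).
Proof.
have := nth_find 0 (Kj_has j); rewrite nth_iota ?Kj_lt // add0n.
by change (goodK O j (KjO j) -> good' j (tK j)); rewrite goodK_iff.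
Qed.

Lemma tK_min j c : rnd (j, c) < tK j -> ~~ good' j (rnd (j, c)).
Proof.
have [l <-] := Ocat_surj j c; rewrite /tK Ocat_lt => lK.
have := before_find 0 lK; rewrite nth_iota ?add0n; last by apply: ltn_trans lK (Kj_lt j).
by rewrite goodK_iff => ->.
Qed.

Lemma prod_reindex j : \prod_(l < p | Kj O j <= l) kk O j (Ocat O j l) =
  \prod_(c : 'I_p | tK j <= rnd (j, c)) kk O j c.
Proof.
rewrite [RHS](reindex_inj (@Ocat_inj j)) /=; apply: eq_bigl => l.
by rewrite /tK [RHS]leqNgt Ocat_lt leqNgt.
Qed.

Lemma sum_reindex j : \sum_(l < p) (kk O j (Ocat O j l) - 1) = \sum_(c : 'I_p) (kk O j c - 1).
Proof. by rewrite [RHS](reindex_inj (@Ocat_inj j)). Qed.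

Hypothesis n_gt0 : 0 < n.

Lemma fr_inj : injective fr.
Proof.
move=> j j' E; have [c Ec] := fr_ex j p_gt0; have [c' Ec'] := fr_ex j' p_gt0.
by move: E; rewrite Ec Ec' => /rnd_inj [].
Qed.

Definition r j := #|[set j' | fr j' < fr j]|.

Lemma r_lt j : r j < n.
Proof.
have : #|[set j' | fr j' < fr j]| < #|[set: 'I_n]|.
  by apply: proper_card; apply/properP; split; [apply: subsetT | exists j; rewrite ?inE ?ltnn].
by rewrite cardsT card_ord.
Qed.

Lemma r_mono j j' : fr j < fr j' -> r j < r j'.
Proof.
move=> H; apply: proper_card; apply/properP; split.
  by apply/subsetP => x; rewrite !inE => /ltn_trans; apply.
by exists j; rewrite !inE ?ltnn.
Qed.

Lemma r_mono' j j' : r j < r j' -> fr j < fr j'.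
Proof.
move=> H; rewrite ltnNge; apply/negP => H'.
have : r j' <= r j.
  by apply: subset_leq_card; apply/subsetP => x; rewrite !inE => /leq_trans; apply.
by rewrite leqNgt H.
Qed.

Definition rO j : 'I_n := Ordinal (r_lt j).

Lemma rO_inj : injective rO.
Proof.
move=> j j' /(congr1 val) /= E; apply: fr_inj.
case: (ltngtP (fr j) (fr j')) => // /r_mono; by rewrite E ltnn.
Qed.

Lemma predo_lt (i : 'I_n) : (if val i == 0 then n.-1 else (val i).-1) < n.
Proof. case: ifP => _; [by rewrite prednK // | exact: leq_ltn_trans (leq_pred _) (ltn_ord i)]. Qed.

Definition predo (i : 'I_n) : 'I_n := Ordinal (predo_lt i).

Lemma predo_inj : injective predo.
Proof.
move=> i i' /(congr1 val) /=; have := ltn_ord i; have := ltn_ord i'.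
case: eqP => e1; case: eqP => e2 => h1 h2 E; apply: val_inj => /=; lia.
Qed.

Definition pi j := invF rO_inj (predo (rO j)).

Lemma rO_pi j : rO (pi j) = predo (rO j).
Proof. by rewrite /pi f_invF. Qed.

Lemma pi_inj : injective pi.
Proof. by move=> j j' E; apply: rO_inj; apply: predo_inj; rewrite -!rO_pi E. Qed.

Lemma fr_pi j : r j != 0 -> fr (pi j) < fr j.
Proof.
move=> H; apply: r_mono'; have := congr1 val (rO_pi j) => /= ->.
by move: H; case: eqP => e H; lia.
Qed.

Lemma pi_neq j : (r j != 0) || (1 < n) -> pi j != j.
Proof.
move=> H; apply/eqP => E; have := congr1 val (rO_pi j); rewrite E /=.
move: H (r_lt j); case: eqP => e; lia.
Qed.

Lemma x0_ex : 'I_n * 'I_p.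
Proof. exact: (Ordinal n_gt0, Ordinal p_gt0). Qed.

Lemma fr_a1 j : r j = 0 -> fr j = 0.
Proof.
move=> H; pose x := nth x0_ex O 0.
have rx : rnd x = 0 by apply: rnd_nth; rewrite muln_gt0 n_gt0 p_gt0.
have f0 : fr x.1 = 0 by apply/eqP; rewrite -leqn0 -rx; case: x rx => a b _; apply: fr_le.
apply/eqP; rewrite -leqn0 leqNgt; apply/negP => hj.
have : 0 < r j by apply/card_gt0P; exists x.1; rewrite inE f0.
by rewrite H.
Qed.

Definition Aall j := Fb (pi j).

Lemma Aall_alloc : is_allocation Aall.
Proof.
move=> i d; pose f := fun j => Fv (pi j, i).
have fi : injective f by move=> a b /(congr1 val) /= /pos_inj /pi_inj.
exists (invF fi d); split; first by rewrite /Aall ffunE -/(f _) f_invF.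
by move=> j; rewrite /Aall ffunE -/(f j) => <-; rewrite invF_f.
Qed.

Lemma A_lt j : r j != 0 -> exists2 c, Aall j c < Fb j c & Aall j c < cnt c (fr j).
Proof.
move=> H; have [c Ec] := fr_ex (pi j) p_gt0; exists c; rewrite !ffunE /=.
  apply: (leq_trans (pos_cnt_lt (x := (pi j, c)) (t := fr j) _)); first by rewrite /= -Ec fr_pi.
  by apply: pos_le_cnt; apply: fr_le.
by apply: (pos_cnt_lt (x := (pi j, c))); rewrite /= -Ec fr_pi.
Qed.

Lemma A_notavail j : r j != 0 -> ~~ (Aall j \in available (st (fr j)) j).
Proof.
move=> /A_lt [c _ H]; apply/negP => /avail_stP /(_ c); rewrite ltnNge fr_le /=.
by rewrite leqNgt H.
Qed.

Definition isB j (b : bundle n p) :=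
  [exists c, [forall c', (c' != c) ==> (b c' == Fb j c')] && (Fb j c < b c)].

Lemma A_notB j : r j != 0 -> ~~ isB j (Aall j).
Proof.
move=> /A_lt [c H _]; apply/negP => /existsP [c0 /andP[/forallP H1 H2]].
case: (eqVneq c c0) => [E|ne].
  by subst c0; move: (ltn_trans H H2); rewrite ltnn.
by move: (H1 c); rewrite ne /= => /eqP E; rewrite E ltnn in H.
Qed.

Variable opt : 'I_n -> bool.
Local Notation Q := (n * p).

Definition upd (b : bundle n p) (c : 'I_p) (v : 'I_n) : bundle n p :=
  [ffun c' => if c' == c then v else b c'].

Definition T1 j : bundle n p :=
  match [pick x : 'I_n * 'I_p | (fr j < rnd x) && (rnd x < rnd (j, x.2))] with
  | Some x => upd (Fb j) x.2 (Fv x)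
  | None => Fb j
  end.

Definition Topt j := if r j != 0 then Aall j else if good' j (fr j) then Fb j else T1 j.
Definition Tj j := if opt j then Topt j else Aall j.

Definition S0 j := available (st (fr j)) j.
Definition SK j := available (st (tK j)) j.

Definition clsO j b :=
  if b \notin S0 j then 0 else if b == Topt j then 0 else if b == Aall j then 1
  else if b \in SK j then (if b == Fb j then Q + 3 else Q + 4) else 2 + (Q - fd j b).
Definition clsP j b := if b == Fb j then 2 else if isB j b then 3 + Q - fd j b else 1.
Definition cls j b := if opt j then clsO j b else clsP j b.

Local Notation M := (#|bundle n p|.+1).
Definition tb j (b : bundle n p) := if b == Tj j then 0 else (enum_rank b).+1.
Definition key j b := cls j b * M + tb j b.
Definition Prof j := sort (fun x y => key j x <= key j y) (enum (bundle n p)).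

Lemma tb_lt j b : tb j b < M.
Proof. by rewrite /tb; case: ifP => // _; rewrite ltnS ltn_ord. Qed.

Lemma tb_inj j : injective (tb j).
Proof.
move=> b b'; rewrite /tb; case: eqP => e1; case: eqP => e2 //; first by rewrite e1 e2.
by move=> [] /ord_inj /enum_rank_inj.
Qed.

Lemma key_inj j : injective (key j).
Proof.
move=> b b' E.
have h1 : key j b %% M = tb j b by rewrite /key modnMDl modn_small // tb_lt.
have h2 : key j b' %% M = tb j b' by rewrite /key modnMDl modn_small // tb_lt.
by apply: (tb_inj (j := j)); rewrite -h1 -h2 E.
Qed.

Lemma key_lt_cls j b b' : cls j b < cls j b' -> key j b < key j b'.
Proof.
move=> H; rewrite /key; apply: (@leq_trans ((cls j b).+1 * M)).
  by rewrite mulSnr ltn_add2l tb_lt.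
by apply: leq_trans (leq_addr _ _); rewrite leq_mul2r H orbT.
Qed.

Lemma cls_le_key j b b' : key j b < key j b' -> cls j b <= cls j b'.
Proof. by move=> H; rewrite leqNgt; apply/negP => /key_lt_cls; rewrite ltnNge ltnW. Qed.

Lemma rank_key j b : rank (Prof j) b = #|[pred y | key j y < key j b]|.+1.
Proof. by rewrite /rank /Prof rank_sort //; apply: key_inj. Qed.

Lemma rank_mono j b b' : key j b < key j b' -> rank (Prof j) b < rank (Prof j) b'.
Proof.
move=> H; rewrite !rank_key ltnS; apply: proper_card; apply/properP; split.
  by apply/subsetP => y; rewrite !inE => /ltn_trans; apply.
by exists b; rewrite !inE ?ltnn.
Qed.

Lemma Prof_lin j : is_linorder (Prof j).
Proof. by rewrite /is_linorder /Prof perm_sort perm_refl. Qed.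

Lemma upd_eq b c v : upd b c v c = v.
Proof. by rewrite ffunE eqxx. Qed.
Lemma upd_neq b c v c' : c' != c -> upd b c v c' = b c'.
Proof. by rewrite ffunE => /negbTE ->. Qed.

Lemma Fv_ne j j' c : j != j' -> Fv (j, c) != Fv (j', c).
Proof. by move=> ne; apply/eqP => /(congr1 val) /= /pos_inj E; rewrite E eqxx in ne. Qed.

Lemma witness_ne j (x : 'I_n * 'I_p) : rnd x < rnd (j, x.2) -> x.1 != j.
Proof. by case: x => j' c /=; apply: contraTneq => ->; rewrite ltnn. Qed.

Lemma ngood_n j u : ~~ good' j u -> 1 < n.
Proof.
case/forallPn => x; rewrite negbK => /andP[_ /witness_ne].
rewrite ltnNge; apply: contra => n1; apply/eqP/val_inj.
by move: (ltn_ord x.1) (ltn_ord j) n1 => /=; lia.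
Qed.

Lemma fr_le_tK j : fr j <= tK j.
Proof. exact: fr_le. Qed.

Lemma tK_le_fr j : good' j (fr j) -> tK j <= fr j.
Proof.
have [c Ec] := fr_ex j p_gt0; rewrite Ec leqNgt => g; apply/negP => /tK_min.
by rewrite g.
Qed.

Lemma cnt_tK j c : tK j <= rnd (j, c) -> cnt c (tK j) = pos (j, c).
Proof.
move=> H; apply/eqP; rewrite eqn_leq (pos_le_cnt (x := (j, c)) H) /=.
apply: subset_leq_card; apply/subsetP => j'; rewrite !inE => h.
move: (forallP (tK_good j) (j', c)); rewrite /= h andbT -leqNgt leq_eqVlt.
case/orP => // /eqP E.
have E' : (j', c) = (j, Ocat O j (KjO j)) by apply: rnd_inj; rewrite E.
by case: E' => ej _; subst j'; rewrite ltnn in h.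
Qed.

Lemma upd_notSK j (x : 'I_n * 'I_p) : rnd x < rnd (j, x.2) -> upd (Fb j) x.2 (Fv x) \notin SK j.
Proof.
move=> H; have ne := witness_ne H.
apply/negP => /avail_stP /(_ x.2); rewrite upd_eq.
case: ltnP => h.
  by move=> E; move: (Fv_ne x.2 ne); rewrite -E; case: x {H ne E h} => ? ?; rewrite eqxx.
have hx : rnd x < tK j.
  move: (forallP (tK_good j) x); rewrite H andbT -leqNgt leq_eqVlt.
  case/orP => // /eqP E; move: (rnd_inj E) => Ex.
  by move: ne; rewrite Ex eqxx.
by move=> hc; move: (pos_cnt_lt hx); rewrite ltnNge => /negP; apply.
Qed.

Lemma S0_a1 j b : r j = 0 -> b \in S0 j.
Proof.
move=> /fr_a1 f0; apply/avail_stP => c; rewrite f0 ltn0.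
by rewrite /cnt (_ : [set _ | _] = set0) ?cards0 //; apply/setP => j'; rewrite !inE ltn0.
Qed.

Lemma T1_spec j : ~~ good' j (fr j) ->
  exists x : 'I_n * 'I_p, [/\ fr j < rnd x, rnd x < rnd (j, x.2) & T1 j = upd (Fb j) x.2 (Fv x)].
Proof.
move=> g; rewrite /T1; case: pickP => [x /andP[h1 h2] | none]; first by exists x.
case/forallPn: g => x; rewrite negbK => hx.
by move: (none x); rewrite hx.
Qed.

Lemma T1_neF j : ~~ good' j (fr j) -> T1 j != Fb j.
Proof.
move=> g; have [[j' c] [_ h2 ->]] := T1_spec g; apply/eqP => /ffunP /(_ c).
rewrite upd_eq ffunE => E; move: (Fv_ne c (witness_ne h2)); by rewrite /= E eqxx.
Qed.

Lemma S0_SK j b : b \in SK j -> b \in S0 j.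
Proof. exact: avail_mono (fr_le_tK j). Qed.

Lemma Topt_notSK j : Topt j != Fb j -> Topt j \notin SK j.
Proof.
rewrite /Topt; case: ifP => [rj _|rj].
  by apply: contra (A_notavail rj) => /S0_SK.
case: ifP => [_|g _]; first by rewrite eqxx.
have [x [_ h2 ->]] := T1_spec (negbT g).
exact: upd_notSK.
Qed.

Lemma Aall_ne j c : (r j != 0) || (1 < n) -> Aall j c != Fb j c.
Proof. by move/pi_neq => ne; rewrite !ffunE; apply: Fv_ne. Qed.

Lemma Topt_cond j : Topt j != Fb j -> (r j != 0) || (1 < n).
Proof.
rewrite /Topt; case: ifP => [//|_].
case: ifP => [_|g _]; first by rewrite eqxx.
by rewrite (ngood_n (negbT g)) orbT.
Qed.

Lemma AF_ne j : Topt j != Fb j -> Aall j != Fb j.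
Proof.
move/Topt_cond/Aall_ne => H; apply/eqP => E.
by move: (H (Ordinal p_gt0)); rewrite E eqxx.
Qed.

Section Opt.
Variable j : 'I_n.
Hypothesis oj : opt j.

Lemma clsE b : cls j b = clsO j b.
Proof. by rewrite /cls oj. Qed.

Lemma key_notSK b : b \notin SK j -> key j b < key j (Fb j).
Proof.
move=> nb; case: (eqVneq (Topt j) (Fb j)) => TF.
  move: TF; rewrite /Topt; case: ifP => [rj|/negbFE/eqP rj].
    by move=> E; move: (A_notavail rj); rewrite E (F_avail).
  case: ifP => g; last by move=> E; move: (T1_neF (negbT g)); rewrite E eqxx.
  have tk0 : tK j = 0 by apply/eqP; rewrite -leqn0 -(fr_a1 rj) tK_le_fr.
  by move: nb; rewrite /SK tk0 -(fr_a1 rj) (S0_a1 _ rj).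
apply: key_lt_cls; rewrite !clsE /clsO.
rewrite /S0 (F_avail) /= [Fb j == _]eq_sym (negbTE TF) [Fb j == _]eq_sym (negbTE (AF_ne TF)) /SK (F_avail) eqxx.
case: ifP => _; first lia.
case: ifP => _; first lia.
case: ifP => _; first lia.
rewrite (negbTE nb); lia.
Qed.

Lemma A_notSK : Topt j != Fb j -> Aall j \notin SK j.
Proof.
move=> TF; case: (eqVneq (r j) 0) => rj; last first.
  by apply: contra (A_notavail rj) => /S0_SK.
have g : ~~ good' j (fr j) by apply: contra TF => g; rewrite /Topt rj eqxx /= g.
have ft : fr j < tK j.
  rewrite ltn_neqAle fr_le_tK andbT; apply: contraNneq g => ->; exact: tK_good.
have [c Ec] := fr_ex j p_gt0.
apply/negP => /avail_stP /(_ c); rewrite -Ec ft => E.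
by move: (Aall_ne c (Topt_cond TF)); rewrite E ffunE eqxx.
Qed.

Lemma clsO_F : Topt j != Fb j -> clsO j (Fb j) = Q + 3.
Proof.
move=> TF; rewrite /clsO /S0 (F_avail) /= [Fb j == _]eq_sym (negbTE TF).
by rewrite [Fb j == _]eq_sym (negbTE (AF_ne TF)) /SK (F_avail) eqxx.
Qed.

Lemma keyF_SK b : b \in SK j -> b != Fb j -> key j (Fb j) < key j b.
Proof.
move=> bS bF; case: (eqVneq (Topt j) (Fb j)) => TF.
  have kF : key j (Fb j) = 0.
    by rewrite /key clsE /clsO /S0 F_avail /= TF eqxx /tb /Tj oj TF eqxx.
  rewrite kF lt0n; apply/negP => /eqP kb; rewrite -kF in kb.
  by move/key_inj: kb => E; rewrite E eqxx in bF.
apply: key_lt_cls; rewrite !clsE clsO_F // /clsO (S0_SK bS) /=.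
have -> : (b == Topt j) = false by apply: contraNF (Topt_notSK TF) => /eqP <-.
have -> : (b == Aall j) = false by apply: contraNF (A_notSK TF) => /eqP <-.
by rewrite bS (negbTE bF); lia.
Qed.

Lemma upd_avail t (x : 'I_n * 'I_p) : t <= rnd x -> t <= rnd (j, x.2) ->
  upd (Fb j) x.2 (Fv x) \in available (st t) j.
Proof.
move=> h1 h2; apply/avail_stP => c'; case: (eqVneq c' x.2) => [->|ne].
  by rewrite ltnNge h2 /= upd_eq; apply: pos_le_cnt.
rewrite upd_neq // ffunE; case: ltnP => // h; exact: pos_le_cnt.
Qed.

Lemma clsO_le b : b \notin SK j -> clsO j b <= 2 + (Q - fd j b).
Proof. by move=> nb; rewrite /clsO (negbTE nb); do 3 (case: ifP => _; first lia). Qed.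

Lemma improve_opt c b' : b' \in available (st (rnd (j, c))) j -> b' c != Fb j c ->
  exists b'', [/\ b'' \in available (st (rnd (j, c))) j, b'' c = Fb j c & key j b'' < key j b'].
Proof.
move=> ba bc; set t := rnd (j, c) in ba *.
have b'S0 : b' \in S0 j := avail_mono (fr_le j c) ba.
case: (leqP (tK j) t) => ht.
  exists (Fb j); split => //; first exact: F_avail.
  apply: keyF_SK; first exact: avail_mono ht ba.
  by apply: contraNneq bc => ->.
have nS : b' \notin SK j.
  by apply/negP => /avail_stP /(_ c); rewrite ht => E; rewrite E ffunE eqxx in bc.
have [c0 Ec0] := fr_ex j p_gt0.
have g : ~~ good' j (fr j).
  by rewrite Ec0; apply: tK_min; rewrite -Ec0; apply: leq_ltn_trans (fr_le j c) ht.
have n1 := ngood_n g.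
have rn : (r j != 0) || (1 < n) by rewrite n1 orbT.
case: (eqVneq b' (Aall j)) => bA.
  have rj : r j = 0.
    by apply/eqP; apply: contraTT b'S0 => rj; rewrite bA; exact: A_notavail rj.
  have TT : Topt j = T1 j by rewrite /Topt rj eqxx /= (negbTE g).
  have tfr : t = fr j.
    apply/eqP; rewrite eqn_leq fr_le andbT leqNgt; apply/negP => h.
    move/avail_stP: ba => /(_ c0); rewrite -Ec0 h bA => E.
    by move: (Aall_ne c0 rn); rewrite E ffunE eqxx.
  have [x [h1 h2 ET]] := T1_spec g.
  have cx : c != x.2.
    by apply: contraTneq h2 => <-; rewrite -/t tfr -leqNgt ltnW.
  exists (T1 j); split.
  - by rewrite ET tfr; apply: upd_avail; [apply: ltnW | apply: fr_le].
  - by rewrite ET upd_neq.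
  - apply: key_lt_cls; rewrite !clsE /clsO.
    have T1S0 : T1 j \in S0 j by rewrite /S0 ET; apply: upd_avail; [apply: ltnW | apply: fr_le].
    rewrite T1S0 /= TT eqxx b'S0 /=.
    have -> : (b' == T1 j) = false.
      apply/negP => /eqP E; move: (Aall_ne c rn).
      by rewrite -bA E ET upd_neq // eqxx.
    by rewrite bA eqxx.
case: (eqVneq b' (Topt j)) => bT.
  exfalso.
  have rj : r j = 0.
    by apply/eqP; apply: contraTT b'S0 => rj; rewrite bT /Topt rj; exact: A_notavail rj.
  have TT : Topt j = T1 j by rewrite /Topt rj eqxx /= (negbTE g).
  have [x [h1 h2 ET]] := T1_spec g.
  case: (eqVneq c x.2) => cx; last by move: bc; rewrite bT TT ET upd_neq // eqxx.
  move/avail_stP: ba => /(_ x.2); rewrite /t cx ltnn bT TT ET upd_eq.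
  by move: (pos_cnt_lt h2); rewrite ltnNge => /negP.
have clb' : clsO j b' = 2 + (Q - fd j b').
  by rewrite /clsO b'S0 /= (negbTE bT) (negbTE bA) (negbTE nS).
have fdb' : fd j b' <= t by apply: fd_le; rewrite ffunE in bc.
have [x] := forallPn (tK_min ht); rewrite negbK => /andP[h1 h2].
have cx : c != x.2 by apply: contraTneq h2 => <-; rewrite -leqNgt ltnW.
exists (upd (Fb j) x.2 (Fv x)); split.
- by apply: upd_avail; [apply: ltnW | apply: ltnW (ltn_trans h1 h2)].
- by rewrite upd_neq.
- apply: key_lt_cls; rewrite !clsE clb'.
  apply: leq_ltn_trans (clsO_le (upd_notSK h2)) _.
  have H3 : rnd (j, x.2) <= fd j (upd (Fb j) x.2 (Fv x)).
    apply: fd_ge; first exact: ltnW (rnd_lt _).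
    move=> c'' hc; rewrite upd_neq ?ffunE //; apply: contraTneq hc => ->; by rewrite ltnn.
  have H4 := fd_leQ j (upd (Fb j) x.2 (Fv x)).
  have H5 : fd j b' < fd j (upd (Fb j) x.2 (Fv x)) by exact: (leq_ltn_trans fdb' (ltn_trans h1 (leq_trans h2 H3))).
  by rewrite ltn_add2l; apply: ltn_sub2l => //; apply: leq_trans H5 H4.
Qed.

Lemma opt_ok c : opt_choice (Prof j) (st (rnd (j, c))) j c = Some (Fv (j, c)).
Proof.
rewrite /opt_choice; case: pickP => [b /andP[ba /forallP bm] | none] /=.
  congr Some; apply/eqP; apply: contraT => bc; rewrite -[Fv _](ffunE (fun c => Fv (j, c))) in bc.
  have [b'' [b''a _ kl]] := improve_opt ba bc.
  by move: (bm b''); rewrite b''a /= leqNgt (rank_mono kl).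
exfalso.
pose bm := [arg min_(b < Fb j | b \in available (st (rnd (j, c))) j) rank (Prof j) b].
case: (arg_minnP (rank (Prof j)) (F_avail (rnd (j, c)) j)) => b ba bmin.
have ba' : b \in available (st (rnd (j, c))) j by [].
move: (none b); rewrite ba' /= => /negbT/negP; apply.
by apply/forallP => b'; apply/implyP => /bmin.
Qed.
End Opt.

Section Pes.
Variable j : 'I_n.
Hypothesis pj : opt j = false.

Lemma clsEp b : cls j b = clsP j b.
Proof. by rewrite /cls pj. Qed.

Lemma pes_key c (b : bundle n p) (d : 'I_n) :
  b \in available (st (rnd (j, c))) j -> b c = Fb j c ->
  d \in remaining (st (rnd (j, c))) c -> d != Fv (j, c) ->
  key j b < key j (upd (Fb j) c d).
Proof.
move=> ba bc dr dF; set t := rnd (j, c) in ba dr *.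
rewrite remaining_st in dr.
have Fc : Fb j c < d.
  by rewrite ffunE ltn_neqAle eq_sym dF.
have iB : isB j (upd (Fb j) c d).
  apply/existsP; exists c; rewrite upd_eq Fc andbT.
  by apply/forallP => c'; apply/implyP => ne; rewrite upd_neq.
have BF : (upd (Fb j) c d == Fb j) = false.
  by apply/negP => /eqP /ffunP /(_ c); rewrite upd_eq => E; rewrite E ltnn in Fc.
have fB : fd j (upd (Fb j) c d) <= t by apply: fd_le; rewrite upd_eq.
have tQ : t < n * p by apply: rnd_lt.
apply: key_lt_cls; rewrite !clsEp /clsP BF iB.
case: ifP => bF; first by move: fB tQ; move: (fd j _) (n * p) => a q; lia.
case: ifP => iBb; last by move: fB tQ; move: (fd j _) (n * p) => a q; lia.
have fb : t.+1 <= fd j b.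
  apply: fd_ge; first exact: tQ.
  move=> c'' h; rewrite ltnS leq_eqVlt in h; case/orP: h => h.
    by move/eqP: h => /rnd_inj [->]; rewrite bc ffunE.
  by move/avail_stP: ba => /(_ c''); rewrite h.
have := fd_leQ j b; move: fb fB tQ; move: (fd j b) (fd j _) (n * p) => a a' q; lia.
Qed.

Lemma pes_ok c : pes_choice (Prof j) (st (rnd (j, c))) j c = Some (Fv (j, c)).
Proof.
set t := rnd (j, c).
pose w d := worst_rank (Prof j) (st t) j c d.
have Fr : Fv (j, c) \in remaining (st t) c by rewrite remaining_st; exact: leqnn.
have H1 : forall d, d \in remaining (st t) c -> d != Fv (j, c) -> w (Fv (j, c)) < w d.
  move=> d dr dF.
  have Ba : upd (Fb j) c d \in available (st t) j.
    apply/avail_stP => c'; case: (eqVneq c' c) => [->|ne].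
      by rewrite ltnn upd_eq -remaining_st.
    rewrite upd_neq // ffunE; case: ltnP => // h; exact: pos_le_cnt.
  apply: (@leq_trans (rank (Prof j) (upd (Fb j) c d))); last first.
    by apply: (leq_bigmax_cond (upd (Fb j) c d)); rewrite Ba upd_eq eqxx.
  have rpos : 0 < rank (Prof j) (upd (Fb j) c d) by [].
  rewrite -(prednK rpos) ltnS; apply/bigmax_leqP => b /andP[ba /eqP bc].
  rewrite -ltnS prednK //; apply: rank_mono; apply: pes_key => //.
  by rewrite bc ffunE.
rewrite /pes_choice; case: pickP => [d /andP[dr /forallP dm] | none].
  congr Some; apply/eqP; apply: contraT => dF.
  move: (dm (Fv (j, c))); rewrite Fr /= -/(w d) -/(w (Fv (j, c))) leqNgt.
  by rewrite (H1 _ dr dF).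
exfalso; move: (none (Fv (j, c))); rewrite Fr /= => /negbT/negP; apply.
apply/forallP => d'; apply/implyP => dr.
case: (eqVneq d' (Fv (j, c))) => [->//|ne].
by apply: ltnW; apply: H1.
Qed.

End Pes.

Lemma card_bundle : #|bundle n p| = n ^ p.
Proof. by rewrite card_ffun !card_ord. Qed.

Lemma card_SK j : #|[pred b | b \in SK j]| = \prod_(c : 'I_p | tK j <= rnd (j, c)) kk O j c.
Proof.
pose D := fun c : 'I_p => if rnd (j, c) < tK j then pred1 (Fv (j, c)) else [pred d : 'I_n | cnt c (tK j) <= d].
have -> : #|[pred b | b \in SK j]| = #|family D|.
  apply: eq_card => b; rewrite inE; apply/avail_stP/familyP => H c; move: (H c); rewrite /D;
    by case: ifP => _ //= /eqP.
rewrite card_family foldrE big_map big_enum /= [RHS]big_mkcond /=; apply: eq_bigr => c _.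
rewrite /D; case: (ltnP (rnd (j, c)) (tK j)) => h /=.
  by rewrite (@eq_card _ _ (pred1 (Fv (j, c)))) // card1.
rewrite kk_pos -cnt_tK // -(card_ge (cnt_le c (tK j))).
by apply: eq_card => d; rewrite !inE.
Qed.

Lemma rank_opt j : opt j -> rank (Prof j) (Fb j) = n ^ p + 1 - \prod_(c : 'I_p | tK j <= rnd (j, c)) kk O j c.
Proof.
move=> oj; rewrite rank_key.
have -> : #|[pred y | key j y < key j (Fb j)]| = #|[pred b | b \notin SK j]|.
  apply: eq_card => y; rewrite !inE; apply/idP/idP => [H|]; last exact: key_notSK.
  apply/negP => yS; case: (eqVneq y (Fb j)) => [E|ne]; first by rewrite E ltnn in H.
  by move: (keyF_SK oj yS ne); rewrite ltnNge ltnW.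
have cS := card_SK j.
have : #|[pred b | b \in SK j]| + #|[pred b | b \notin SK j]| = n ^ p.
  rewrite -card_bundle -(cardC [pred b | b \in SK j]); congr (_ + _); apply: eq_card => b; by rewrite !inE.
rewrite cS; move: (\prod_(_ | _) _) => P; lia.
Qed.

Lemma isB_F j : ~~ isB j (Fb j).
Proof. by apply/existsPn => c; rewrite ltnn andbF. Qed.

Lemma card_isB j : #|[pred b | isB j b]| = \sum_(c : 'I_p) (kk O j c - 1).
Proof.
pose X := [set x : 'I_p * 'I_n | Fb j x.1 < x.2].
pose f := fun x : 'I_p * 'I_n => upd (Fb j) x.1 x.2.
have -> : #|[pred b | isB j b]| = #|f @: X|.
  apply: eq_card => b; rewrite inE; apply/idP/imsetP.
    case/existsP => c /andP[/forallP H1 H2]; exists (c, b c); first by rewrite inE.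
    apply/ffunP => c'; rewrite /f /= ffunE; case: eqP => [->//|/eqP ne].
    by move: (H1 c'); rewrite ne => /eqP.
  case=> [[c d]]; rewrite inE /= => H ->; apply/existsP; exists c; rewrite /f /= upd_eq H andbT.
  by apply/forallP => c'; apply/implyP => ne; rewrite upd_neq.
rewrite card_in_imset; last first.
  move=> [c d] [c' d']; rewrite !inE /f /= => h1 h2 E.
  case: (eqVneq c c') => [ec|ne].
    by subst c'; move/ffunP: E => /(_ c); rewrite !upd_eq => ->.
  by move/ffunP: E => /(_ c); rewrite upd_eq upd_neq // => E; rewrite E ltnn in h1.
rewrite -sum1_card big_mkcond /=.
rewrite (eq_bigr (fun x : 'I_p * 'I_n => (fun c d => if Fb j c < d then 1 else 0) x.1 x.2)); last first.
  by move=> x _; rewrite inE.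
rewrite -(pair_bigA _ (fun (c : 'I_p) (d : 'I_n) => if Fb j c < d then 1 else 0)) /=.
apply: eq_bigr => c _; rewrite -big_mkcond /= sum1_card.
rewrite (@eq_card _ _ [set d : 'I_n | (Fb j c).+1 <= d]); last by move=> d; rewrite !inE.
rewrite card_ge ?ffunE; last exact: pos_lt.
by rewrite kk_pos /=; lia.
Qed.

Lemma rank_pes j : opt j = false -> rank (Prof j) (Fb j) = n ^ p - \sum_(c : 'I_p) (kk O j c - 1).
Proof.
move=> pj; rewrite rank_key.
have clF : cls j (Fb j) = 2 by rewrite clsEp // /clsP eqxx.
have -> : #|[pred y | key j y < key j (Fb j)]| = #|[predD1 [pred b | ~~ isB j b] & Fb j]|.
  apply: eq_card => y; rewrite !inE; apply/idP/idP => [H|/andP[ne nB]].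
    have := cls_le_key H; rewrite clF clsEp // /clsP.
    case: eqP => [E|/eqP ne]; first by rewrite E ltnn in H.
    case: ifP => iB h; last by [].
    by have := fd_leQ j y; move: h; move: (fd j y) (n * p) => a q; lia.
  by apply: key_lt_cls; rewrite clF clsEp // /clsP (negbTE ne) (negbTE nB).
have := cardD1 (Fb j) [pred b | ~~ isB j b]; rewrite inE isB_F /= add1n => E.
have := cardC [pred b | isB j b]; rewrite card_bundle card_isB.
rewrite (@eq_card _ [predC [pred b | isB j b]] [pred b | ~~ isB j b]) // E.
move: (\sum_(_ < _) _) (#|_|) => s k; lia.
Qed.

Lemma clsP_ge1 j b : 0 < clsP j b.
Proof.
rewrite /clsP; case: ifP => // _; case: ifP => // _.
by have := fd_leQ j b; move: (fd j b) (n * p) => a q; lia.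
Qed.

Lemma A_neF j : (r j != 0) || (1 < n) -> Aall j != Fb j.
Proof.
move/Aall_ne => H; apply/eqP => E; by move: (H (Ordinal p_gt0)); rewrite E eqxx.
Qed.

Lemma rankA_nz j : r j != 0 -> rank (Prof j) (Aall j) = 1.
Proof.
move=> rj; rewrite rank_key; congr _.+1; apply: eq_card0 => y; rewrite inE; apply/negbTE; rewrite -leqNgt.
rewrite /key /tb /Tj /cls; case: (boolP (opt j)) => oj.
  rewrite /Topt rj eqxx /clsO /S0 (A_notavail rj) /=; exact: leq0n.
rewrite eqxx addn0 /clsP (negbTE (A_neF (j := j) _)) ?rj // (negbTE (A_notB rj)) mul1n.
apply: leq_trans (leq_addr _ _); rewrite -{1}[M]mul1n leq_mul2r; apply/orP; right.
by have := clsP_ge1 j y; rewrite /clsP.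
Qed.

Lemma Tj_opt j : opt j -> Tj j = Topt j.
Proof. by rewrite /Tj => ->. Qed.
Lemma Tj_pes j : opt j = false -> Tj j = Aall j.
Proof. by rewrite /Tj => ->. Qed.

Lemma rankA_a1 j : r j = 0 -> rank (Prof j) (Aall j) <= 2.
Proof.
move=> rj; rewrite rank_key ltnS.
case: (boolP (opt j)) => oj.
  case: (eqVneq (Aall j) (Topt j)) => AT.
    rewrite (_ : #|_| = 0) //; apply: eq_card0 => y; rewrite inE; apply/negbTE; rewrite -leqNgt.
    rewrite /key /tb (Tj_opt oj) -AT eqxx clsE // /clsO S0_a1 //= AT eqxx; exact: leq0n.
  rewrite -(card1 (Topt j)); apply: subset_leq_card; apply/subsetP => y; rewrite !inE => H.
  apply/negPn/negP => yT.
  have := cls_le_key H; rewrite !clsE // /clsO !S0_a1 //= (negbTE AT) eqxx [y == _](negbTE yT).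
  case: eqP => [E|_]; first by rewrite E ltnn in H.
  by case: ifP => _; [case: ifP => _ |]; lia.
have pj : opt j = false by apply/negbTE.
case: (boolP (1 < n)) => n1; last first.
  have cb : #|bundle n p| = 1 by rewrite card_bundle; move: n1 n_gt0; case: (n) => [|[|]] //; rewrite exp1n.
  apply: (@leq_trans #|predC1 (Aall j)|).
    by apply: subset_leq_card; apply/subsetP => y; rewrite !inE; apply: contraTneq => ->; rewrite ltnn.
  by rewrite cardC1 cb.
have rn : (r j != 0) || (1 < n) by rewrite n1 orbT.
have AF : Aall j != Fb j by apply: A_neF.
have tbA : tb j (Aall j) = 0 by rewrite /tb (Tj_pes pj) eqxx.
case: (boolP (isB j (Aall j))) => iB; last first.
  rewrite (_ : #|_| = 0) //; apply: eq_card0 => y; rewrite inE; apply/negbTE; rewrite -leqNgt.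
  rewrite /key tbA addn0 /cls pj /clsP (negbTE AF) (negbTE iB) mul1n.
  apply: leq_trans (leq_addr _ _); rewrite -{1}[M]mul1n leq_mul2r; apply/orP; right.
  by have := clsP_ge1 j y; rewrite /clsP.
rewrite -(card1 (Fb j)); apply: subset_leq_card; apply/subsetP => y; rewrite !inE => H.
apply/negPn/negP => yF.
have yA : y != Aall j by apply: contraTneq H => ->; rewrite ltnn.
have iBA := iB.
case/existsP: iB => c /andP[/forallP Hc _].
have allc : forall c', c' = c.
  move=> c'; apply/eqP; apply: contraT => ne; move: (Hc c'); rewrite ne /=.
  by rewrite (negbTE (Aall_ne c' _)) // n1 orbT.
have f0 : fr j = 0 := fr_a1 rj.
have [c0 Ec0] := fr_ex j p_gt0; rewrite (allc c0) in Ec0.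
have Fc0 : Fb j c = 0 :> nat.
  rewrite ffunE /= /pos /= -Ec0 f0 /cnt; apply/eqP; rewrite cards_eq0; apply/eqP/setP => j'.
  by rewrite !inE ltn0.
have ycF : y c != Fb j c.
  apply: contra yF => /eqP E; apply/eqP/ffunP => c'; by rewrite (allc c').
have iBy : isB j y.
  apply/existsP; exists c; apply/andP; split.
    by apply/forallP => c'; rewrite (allc c') eqxx.
  by rewrite Fc0 lt0n; apply: contra ycF => /eqP E; apply/eqP/val_inj; rewrite /= E Fc0.
have fdy : fd j y = 0.
  by apply/eqP; rewrite -leqn0 -f0 Ec0; apply: fd_le; rewrite ffunE in ycF.
have fdA : fd j (Aall j) = 0.
  apply/eqP; rewrite -leqn0 -f0 Ec0; apply: fd_le.
  by move: (Aall_ne c rn); rewrite [Fb j c]ffunE.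
move: H; rewrite /key tbA addn0 /cls pj /clsP (negbTE yF) (negbTE AF) iBy iBA fdy fdA.
have : 0 < tb j y by rewrite /tb (Tj_pes pj) (negbTE yA).
move: ((3 + Q - 0) * _) (tb j y) => a b; lia.
Qed.

Lemma main_sec : exists P : 'I_n -> seq (bundle n p),
    (forall j, is_linorder (P j)) /\
    (forall j : 'I_n, exists b : bundle n p,
       (forall l : 'I_p, csam O opt P (j, l) = Some (b l)) /\
       rank (P j) b =
         (if opt j then
            n ^ p + 1 - \prod_(l < p | Kj O j <= l) kk O j (Ocat O j l)
          else
            n ^ p - \sum_(l < p) (kk O j (Ocat O j l) - 1))) /\
    (exists A : 'I_n -> bundle n p, is_allocation A /\
       n.-1 <= #|[set j : 'I_n | rank (P j) (A j) == 1]| /\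
       (forall j : 'I_n, rank (P j) (A j) <= 2)).
Proof.
exists Prof; split; first exact: Prof_lin.
split.
  move=> j; exists (Fb j); split.
    move=> l; rewrite (csam_st x0_ex); last first.
      by move=> [j' c] /=; case: ifP => oj; [exact: opt_ok | apply: pes_ok; apply: negbTE; rewrite oj].
    by rewrite !ffunE rnd_lt.
  case: ifP => oj; first by rewrite rank_opt // prod_reindex.
  by rewrite rank_pes // sum_reindex.
exists Aall; split; first exact: Aall_alloc.
split; last first.
  by move=> j; case: (eqVneq (r j) 0) => rj; [exact: rankA_a1 | rewrite rankA_nz].
apply: (@leq_trans #|[set j | r j != 0]|); last first.
  by apply: subset_leq_card; apply/subsetP => j; rewrite !inE => rj; rewrite rankA_nz.
have : #|[set j | r j == 0]| <= 1.
  rewrite -(cards1 (invF rO_inj (Ordinal n_gt0))); apply: subset_leq_card; apply/subsetP => j.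
  rewrite !inE => /eqP rj; apply/eqP; apply: rO_inj; rewrite f_invF; exact: val_inj.
have := cardsC [set j | r j == 0]; rewrite card_ord.
rewrite (_ : ~: _ = [set j | r j != 0]); last by apply/setP => j; rewrite !inE.
move: (#|_|) (#|_|) => a b; lia.
Qed.
End S.

Lemma rank_p0 n (b : bundle n 0) : rank (enum (bundle n 0)) b = 1.
Proof.
rewrite /rank; congr _.+1; apply/eqP; rewrite -leqn0 -ltnS.
have : size (enum (bundle n 0)) = 1 by rewrite -cardT card_ffun !card_ord expn0.
by move=> <-; rewrite index_mem mem_enum.
Qed.

Theorem theorem2 (n p : nat) (O : seq ('I_n * 'I_p)) (opt : 'I_n -> bool) :
  is_linorder O ->
  exists P : 'I_n -> seq (bundle n p),
    (forall j, is_linorder (P j)) /\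
    (forall j : 'I_n, exists b : bundle n p,
       (forall l : 'I_p, csam O opt P (j, l) = Some (b l)) /\
       rank (P j) b =
         (if opt j then
            n ^ p + 1 - \prod_(l < p | Kj O j <= l) kk O j (Ocat O j l)
          else
            n ^ p - \sum_(l < p) (kk O j (Ocat O j l) - 1))) /\
    (exists A : 'I_n -> bundle n p, is_allocation A /\
       n.-1 <= #|[set j : 'I_n | rank (P j) (A j) == 1]| /\
       (forall j : 'I_n, rank (P j) (A j) <= 2)).
Proof.
move=> HO.
case: (posnP p) => [p0|pp]; last case: (posnP n) => [n0|np]; last exact: main_sec.
- subst p; exists (fun _ => enum (bundle n 0)); split.
    by move=> j; rewrite /is_linorder perm_refl.
  split.
    move=> j; exists [ffun _ => j]; split; first by case.
    rewrite rank_p0 expn0; case: (opt j); rewrite big_ord0 //.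
  exists (fun j => [ffun _ => j]); split; first by case.
  split; last by move=> j; rewrite rank_p0.
  rewrite (_ : [set j | _] = [set: 'I_n]) ?cardsT ?card_ord ?leq_pred //.
  by apply/setP => j; rewrite !inE rank_p0.
- subst n; exists (fun _ => [::]); split; first by case.
  split; first by case.
  exists (fun j => [ffun _ => j]); split; first by move=> i [].
  by split; [ | case].
Qed.
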